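(* Let $\mathcal{A}$ and $\mathcal{B}$ be nice GFG-tNCWs with $L(\mathcal{A})=L(\mathcal{B})$, each minimal (i.e., no GFG-tNCW recognizing the same language has fewer states). Then $\mathcal{A}$ and $\mathcal{B}$ are safe isomorphic.
   Context: A tNCW is $\mathcal{A}=\langle\Sigma,Q,q_0,\delta,\alpha\rangle$: finite alphabet $\Sigma$, finite state set $Q$, initial state $q_0$, transition function $\delta:Q\times\Sigma\to 2^Q\setminus\{\emptyset\}$ with transition relation $\Delta=\{\langle q,\sigma,s\rangle:s\in\delta(q,\sigma)\}$, and $\alpha\subseteq\Delta$; $|\mathcal{A}|=|Q|$. $\alpha$-transitions are those in $\alpha$, $\bar\alpha$-transitions those in $\Delta\setminus\alpha$; $\delta^{\alpha}(q,\sigma)$ and $\delta^{\bar\alpha}(q,\sigma)$ are the sets of $\sigma$-successors of $q$ via $\alpha$-, resp. $\bar\alpha$-transitions. A run on $w=\sigma_1\sigma_2\cdots$ is $r_0r_1\cdots$ with $r_0=q_0$, $r_{i+1}\in\delta(r_i,\sigma_{i+1})$; it is accepting iff it traverses $\alpha$-transitions only finitely often; $L(\mathcal{A})$ is the accepted language. $\mathcal{A}^q$ is $\mathcal{A}$ with initial state $q$; $q\sim s$ iff $L(\mathcal{A}^q)=L(\mathcal{A}^s)$. $\mathcal{A}$ is GFG if there is $f:\Sigma^*\to Q$ with $f(\epsilon)=q_0$, $\langle f(u),\sigma,f(u\sigma)\rangle\in\Delta$ for all $u,\sigma$, and for every $w\in L(\mathcal{A})$ the run $f(w[1,0]),f(w[1,1]),\dots$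 is accepting; state $q$ is GFG if $\mathcal{A}^q$ is. $\mathcal{A}$ is semantically deterministic if all $\sigma$-successors of any state are pairwise $\sim$-equivalent; safe deterministic if $|\delta^{\bar\alpha}(q,\sigma)|\le1$ always; normal if whenever a path of $\bar\alpha$-transitions leads from $q$ to $s$, one also leads from $s$ to $q$. $\mathcal{A}$ is nice if all states are reachable and GFG and $\mathcal{A}$ is normal, safe deterministic and semantically deterministic. For tNCWs $\mathcal{A},\mathcal{B}$ over the same alphabet with state sets $Q_\mathcal{A},Q_\mathcal{B}$, a bijection $\kappa:Q_\mathcal{A}\to Q_\mathcal{B}$ is $\bar\alpha$-transition respecting if for all $q,q'\in Q_\mathcal{A}$ and $\sigma\in\Sigma$: $q'\in\delta^{\bar\alpha}_\mathcal{A}(q,\sigma)$ iff $\kappa(q')\in\delta^{\bar\alpha}_\mathcal{B}(\kappa(q),\sigma)$. $\mathcal{A}$ and $\mathcal{B}$ are safe isomorphic if such a bijection exists. *)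

(* Defs.v *)
From mathcomp Require Import all_boot.
Unset Implicit Arguments. Unset Printing Implicit Defensive.

(* Transition-based nondeterministic co-Buchi word automata (tNCW) over a
   finite alphabet Sigma. Infinite words are functions nat -> Sigma, with
   w i the (i+1)-th letter sigma_{i+1}. *)
Record tNCW (Sigma : finType) := TNCW {
  st : finType;
  init : st;
  delta : st -> Sigma -> {set st};
  delta_ne : forall q a, delta q a != set0;
  alpha : st -> Sigma -> st -> bool;
  alpha_sub : forall q a s, alpha q a s -> s \in delta q a
}.
Arguments init {Sigma} t.
Arguments delta {Sigma t}.
Arguments alpha {Sigma t}.
Arguments st {Sigma}.
Arguments delta_ne {Sigma}.
Arguments alpha_sub {Sigma}.

Section Defs.
Context {Sigma : finType}.
Implicit Types A B : tNCW Sigma.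

Definition word := nat -> Sigma.

Definition with_init {A} (q : st A) : tNCW Sigma :=
  @TNCW Sigma (st A) q (@delta _ A) (delta_ne A) (@alpha _ A) (alpha_sub A).

Definition is_run A (w : word) (r : nat -> st A) : Prop :=
  r 0 = init A /\ forall i, r i.+1 \in delta (r i) (w i).

Definition run_accepting A (w : word) (r : nat -> st A) : Prop :=
  exists N, forall i, N <= i -> ~~ alpha (r i) (w i) (r i.+1).

Definition accepts A (w : word) : Prop :=
  exists r, is_run A w r /\ run_accepting A w r.

Definition lang A : word -> Prop := accepts A.

Definition same_lang A B : Prop := forall w, accepts A w <-> accepts B w.

Definition equiv_st {A} (q s : st A) : Prop :=
  same_lang (with_init q) (with_init s).

Definition prefix (w : word) (i : nat) : seq Sigma := mkseq w i.

Definition GFG A : Prop :=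
  exists f : seq Sigma -> st A,
    f [::] = init A /\
    (forall u (a : Sigma), f (rcons u a) \in delta (f u) a) /\
    (forall w, accepts A w -> run_accepting A w (fun i => f (prefix w i))).

Definition GFG_state {A} (q : st A) : Prop := GFG (with_init q).

Definition semantically_deterministic A : Prop :=
  forall (q : st A) a (s s' : st A), s \in delta q a -> s' \in delta q a -> equiv_st s s'.

Definition safe_deterministic A : Prop :=
  forall (q : st A) a, #|[set s in @delta _ A q a | ~~ alpha q a s]| <= 1.

Definition trans_rel A : rel (st A) :=
  fun (q s : st A) => [exists a, s \in delta q a].

Definition safe_rel A : rel (st A) :=
  fun (q s : st A) => [exists a, (s \in delta q a) && ~~ alpha q a s].

Definition normal A : Prop :=
  forall q s : st A, connect (@safe_rel A) q s -> connect (@safe_rel A) s q.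

Definition all_reachable A : Prop :=
  forall q : st A, connect (@trans_rel A) (init A) q.

Definition nice A : Prop :=
  [/\ all_reachable A, (forall q : st A, GFG_state q),
      normal A, safe_deterministic A & semantically_deterministic A].

Definition minimal_GFG A : Prop :=
  forall C : tNCW Sigma, GFG C -> same_lang C A -> #|st A| <= #|st C|.

Definition safe_respecting {A B} (k : st A -> st B) : Prop :=
  forall (q q' : st A) (a : Sigma),
    ((q' \in delta q a) && ~~ alpha q a q') =
    ((k q' \in delta (k q) a) && ~~ alpha (k q) a (k q')).

Definition safe_isomorphic A B : Prop :=
  exists k : st A -> st B, bijective k /\ safe_respecting k.

End Defs.

(* Main.v *)
Require Import Defs.
From mathcomp Require Import all_boot zify.
From Stdlib Require Import ClassicalEpsilon Classical.
Set Implicit Arguments. Unset Strict Implicit.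


Section Basics.
Context {Sigma : finType}.
Implicit Types X Y : tNCW Sigma.
Local Notation word := (@word Sigma).

Definition wcons (a : Sigma) (z : word) : word :=
  fun n => if n is m.+1 then z m else a.
Definition wdrop (i : nat) (w : word) : word := fun n => w (i + n).

Lemma accepts_ext X w w' : (forall n, w n = w' n) -> accepts X w -> accepts X w'.
Proof.
move=> E [r [[r0 rs] [N HN]]]; exists r; split; [split|exists N] => // i.
  by rewrite -E; apply: rs.
by rewrite -E; apply: HN.
Qed.

Lemma acc_cons X (x y : st X) a z :
  y \in delta x a -> accepts (with_init y) z -> accepts (with_init x) (wcons a z).
Proof.
move=> Hy [r [[r0 rs] [N HN]]].
exists (fun n => if n is m.+1 then r m else x); split; first split => //.
  by case=> [|i] /=; [rewrite r0 | apply: rs].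
by exists N.+1 => -[|i] //= Hi; apply: HN.
Qed.

Lemma acc_uncons X (x : st X) a z : accepts (with_init x) (wcons a z) ->
  exists2 y, y \in delta x a & accepts (with_init y) z.
Proof.
move=> [r [[r0 rs] [N HN]]]; exists (r 1).
  by have := rs 0; rewrite r0.
exists (fun n => r n.+1); split; first by split => // i; apply: (rs i.+1).
by exists N => i Hi; apply: (HN i.+1); apply: leqW.
Qed.

Definition equivX X Y (x : st X) (y : st Y) := same_lang (with_init x) (with_init y).

Lemma equivX_refl X (x : st X) : equivX x x.
Proof. by move=> w. Qed.
Lemma equivX_sym X Y (x : st X) (y : st Y) : equivX x y -> equivX y x.
Proof. by move=> E w; split => /(E w). Qed.
Lemma equivX_trans X Y Z (x : st X) (y : st Y) (z : st Z) :
  equivX x y -> equivX y z -> equivX x z.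
Proof. by move=> E1 E2 w; rewrite (E1 w) (E2 w). Qed.

Lemma acc_step X (x y : st X) a z : semantically_deterministic X ->
  y \in delta x a ->
  (accepts (with_init x) (wcons a z) <-> accepts (with_init y) z).
Proof.
move=> sd Hy; split; last exact: acc_cons.
move/acc_uncons => [y' Hy' Ha]; have E := sd x a y' y Hy' Hy.
exact: ((E z).1 Ha).
Qed.

Lemma succ_equiv X Y (x : st X) (x' : st Y) a y y' :
  semantically_deterministic X -> semantically_deterministic Y ->
  equivX x x' -> y \in delta x a -> y' \in delta x' a -> equivX y y'.
Proof.
move=> sdX sdY E Hy Hy' z.
rewrite -(acc_step z sdX Hy) -(acc_step z sdY Hy').
exact: E.
Qed.

Inductive steps X : st X -> seq Sigma -> st X -> Prop :=
| steps0 x : steps x [::] x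
| stepsS x a y u z : y \in delta x a -> steps y u z -> steps x (a :: u) z.
Arguments steps {X}.

Lemma steps_rcons X (x y z : st X) u a :
  steps x u y -> z \in delta y a -> steps x (rcons u a) z.
Proof.
elim=> [x' Hz | x' b y' u' z' Hy' _ IH Hz] /=.
  by apply: stepsS Hz (steps0 _).
by apply: stepsS Hy' (IH Hz).
Qed.

Lemma steps_cat X (x y z : st X) u v :
  steps x u y -> steps y v z -> steps x (u ++ v) z.
Proof.
elim=> [//| x' b y' u' z' Hy' _ IH Hv] /=.
by apply: stepsS Hy' (IH Hv).
Qed.

Lemma steps_equiv X Y (x : st X) (x' : st Y) u y y' :
  semantically_deterministic X -> semantically_deterministic Y ->
  equivX x x' -> steps x u y -> steps x' u y' -> equivX y y'.
Proof.
move=> sdX sdY E H; elim: H x' y' E => [x0 | x0 a y0 u0 z0 Hy0 _ IH] x' y' E H'.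
  by inversion H'; subst.
inversion H' as [|x1 a1 y1 u1 z1 Hy1 Hs1]; subst.
apply: IH Hs1; exact: (succ_equiv sdX sdY E Hy0 Hy1).
Qed.

Lemma strat_steps X (f : seq Sigma -> st X) :
  f [::] = init X -> (forall u a, f (rcons u a) \in delta (f u) a) ->
  forall u, steps (init X) u (f u).
Proof.
move=> f0 fs; elim/last_ind => [|u a IH]; first by rewrite f0; constructor.
exact: steps_rcons IH (fs u a).
Qed.

Lemma acc_steps X (x y : st X) u w a0 :
  steps x u y -> (forall i, i < size u -> w i = nth a0 u i) ->
  accepts (with_init y) (wdrop (size u) w) -> accepts (with_init x) w.
Proof.
move=> H; elim: H w => [x0 | x0 a y0 u0 z0 Hy0 _ IH] w Hw Hacc.
  by apply: accepts_ext Hacc => n.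
have Hw0 : w 0 = a by apply: (Hw 0).
apply: (accepts_ext (w := wcons a (wdrop 1 w))).
  by case=> [|n] //=.
apply: acc_cons Hy0 _; apply: IH.
  by move=> i Hi; rewrite /wdrop add1n; apply: (Hw i.+1).
by apply: accepts_ext Hacc => n; rewrite /wdrop /= add1n addSn.
Qed.

End Basics.


Section Safe.
Context {Sigma : finType}.
Implicit Types X Y : tNCW Sigma.
Local Notation word := (@word Sigma).
Local Notation pref := Defs.prefix.

Definition safeA X (x : st X) a (y : st X) : bool := (y \in delta x a) && ~~ alpha x a y.
Definition sstep X (x : st X) (a : Sigma) : option (st X) := [pick y | safeA x a y].
Fixpoint sread X (x : st X) (u : seq Sigma) : option (st X) :=
  match u with
  | [::] => Some x
  | a :: u' => if sstep x a is Some y then sread y u' else None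
  end.

Lemma sstep_safe X (x y : st X) a : sstep x a = Some y -> safeA x a y.
Proof. by rewrite /sstep; case: pickP => // y' H [<-]. Qed.

Lemma sstep_det X (x y : st X) a : safe_deterministic X -> safeA x a y -> sstep x a = Some y.
Proof.
move=> sd Hs; rewrite /sstep; case: pickP => [y' Hy'|H]; last by rewrite H in Hs.
congr Some; have /card_le1_eqP E := sd x a.
have Hy1 : y' \in [set s in delta x a | ~~ alpha x a s] by rewrite inE.
have Hy2 : y \in [set s in delta x a | ~~ alpha x a s] by rewrite inE.
by rewrite (E _ _ Hy2 Hy1).
Qed.

Lemma sread_cat X (x : st X) u v :
  sread x (u ++ v) = obind (fun y => sread y v) (sread x u).
Proof.
elim: u x => [//|a u IH] x /=; case: (sstep x a) => // y; exact: IH.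
Qed.

Lemma sread_rcons X (x : st X) u a :
  sread x (rcons u a) = obind (fun y => sstep y a) (sread x u).
Proof.
rewrite -cats1 sread_cat; case: (sread x u) => //= y; by case: (sstep y a).
Qed.

Lemma sread_take X (x : st X) u n : sread x u != None -> sread x (take n u) != None.
Proof.
rewrite -{1}(cat_take_drop n u) sread_cat; by case: (sread x (take n u)).
Qed.

Lemma sread_steps X (x y : st X) u : sread x u = Some y -> steps x u y.
Proof.
elim: u x => [|a u IH] x /=; first by move=> [->]; constructor.
case E: (sstep x a) => [z|] // H.
have /andP [Hz _] := sstep_safe E.
apply: stepsS Hz (IH _ H).
Qed.

Lemma safe_rel_safeA X (x y : st X) a : safeA x a y -> safe_rel X x y.
Proof. by move=> H; apply/existsP; exists a. Qed.

Lemma sread_connect X (x y : st X) u : sread x u = Some y -> connect (safe_rel X) x y.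
Proof.
elim: u x => [|a u IH] x /=; first by move=> [->]; exact: connect0.
case E: (sstep x a) => [z|] // H.
apply: connect_trans (connect1 (safe_rel_safeA (sstep_safe E))) (IH _ H).
Qed.

Lemma connect_sread X (x y : st X) : safe_deterministic X ->
  connect (safe_rel X) x y -> exists u, sread x u = Some y.
Proof.
move=> sd /connectP [p Hp ->]; elim: p x Hp => [|x1 p IH] x /=.
  by move=> _; exists [::].
move=> /andP [/existsP [a Ha] Hp]; have [u Hu] := IH _ Hp.
by exists (a :: u); rewrite /= (sstep_det sd Ha).
Qed.

Definition SPsub X Y (x : st X) (y : st Y) :=
  forall u, sread x u != None -> sread y u != None.

Lemma SPsub_refl X (x : st X) : SPsub x x. Proof. by []. Qed.
Lemma SPsub_trans X Y Z (x : st X) (y : st Y) (z : st Z) :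
  SPsub x y -> SPsub y z -> SPsub x z.
Proof. by move=> H1 H2 u /H1 /H2. Qed.

Lemma SPsub_step X Y (x x' : st X) (y : st Y) a :
  SPsub x y -> sstep x a = Some x' -> exists2 y', sstep y a = Some y' & SPsub x' y'.
Proof.
move=> H E; have := H [:: a]; rewrite /= E /=.
case E': (sstep y a) => [y'|]; last by move/(_ isT).
move=> _; exists y' => // u Hu.
by have := H (a :: u); rewrite /= E E'; apply.
Qed.

Definition sqsub X Y (x : st X) (y : st Y) := equivX x y /\ SPsub x y.

Lemma sqsub_refl X (x : st X) : sqsub x x.
Proof. by split; [apply: equivX_refl | apply: SPsub_refl]. Qed.
Lemma sqsub_trans X Y Z (x : st X) (y : st Y) (z : st Z) :
  sqsub x y -> sqsub y z -> sqsub x z.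
Proof.
by move=> [E1 S1] [E2 S2]; split; [apply: equivX_trans E1 E2 | apply: SPsub_trans S1 S2].
Qed.

Lemma sqsub_step X Y (x x' : st X) (y : st Y) a :
  semantically_deterministic X -> semantically_deterministic Y ->
  sqsub x y -> sstep x a = Some x' -> exists2 y', sstep y a = Some y' & sqsub x' y'.
Proof.
move=> sdX sdY [E S] Hx; have [y' Hy' S'] := SPsub_step S Hx.
exists y' => //; split => //.
have /andP [Hx1 _] := sstep_safe Hx; have /andP [Hy1 _] := sstep_safe Hy'.
exact: succ_equiv sdX sdY E Hx1 Hy1.
Qed.

Lemma sqsub_read X Y (x x' : st X) (y : st Y) u :
  semantically_deterministic X -> semantically_deterministic Y ->
  sqsub x y -> sread x u = Some x' -> exists2 y', sread y u = Some y' & sqsub x' y'.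
Proof.
move=> sdX sdY; elim: u x y => [|a u IH] x y /=; first by move=> H [<-]; exists y.
move=> H; case E: (sstep x a) => [x1|] // Hr.
have [y1 Ey1 H1] := sqsub_step sdX sdY H E.
rewrite Ey1; exact: IH H1 Hr.
Qed.

Lemma safe_acc X (x : st X) (z : word) :
  (forall n, sread x (pref z n) != None) -> accepts (with_init x) z.
Proof.
move=> H.
exists (fun n => odflt x (sread x (pref z n))).
have key : forall n, exists2 y, sread x (pref z n) = Some y &
   exists2 y', sread x (pref z n.+1) = Some y' & safeA y (z n) y'.
  move=> n; case E: (sread x (pref z n)) (H n) => [y|] // _; exists y => //.
  have := H n.+1; rewrite /pref /Defs.prefix mkseqS sread_rcons -/(pref z n) E /=.
  case E2: (sstep y (z n)) => [y'|] // _; exists y' => //; exact: sstep_safe.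
split; first split => //.
  by move=> i; have [y -> [y' -> /andP []]] := key i.
by exists 0 => i _; have [y -> [y' -> /andP []]] := key i.
Qed.

Lemma strat_safe_read X (f : seq Sigma -> st X) a0 :
  safe_deterministic X -> (forall u a, f (rcons u a) \in delta (f u) a) ->
  forall v P, (forall j, j < size v ->
     ~~ alpha (f (P ++ take j v)) (nth a0 v j) (f (P ++ take j.+1 v))) ->
  sread (f P) v = Some (f (P ++ v)).
Proof.
move=> sd fs; elim=> [|a v IH] P H /=; first by rewrite cats0.
have H0 := H 0 erefl; rewrite /= take0 cats0 in H0.
have Hs : safeA (f P) a (f (rcons P a)) by rewrite /safeA fs /= -cats1.
rewrite (sstep_det sd Hs) -cats1.
have -> : P ++ a :: v = (P ++ [:: a]) ++ v by rewrite -catA.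
apply: IH => j Hj; by move: (H j.+1 Hj); rewrite /= -!catA.
Qed.

End Safe.


Definition pb (P : Prop) : bool := if excluded_middle_informative P then true else false.
Lemma pbP (P : Prop) : reflect P (pb P).
Proof. rewrite /pb; case: excluded_middle_informative => H; by constructor. Qed.

Section Reduction.
Context {Sigma : finType}.
Local Notation word := (@word Sigma).
Local Notation pref := Defs.prefix.
Variable A : tNCW Sigma.
Hypotheses (sdA : semantically_deterministic A) (safedA : safe_deterministic A).
Variable R : {set st A}.
Variable y : st A -> st A.
Hypothesis yR : forall x, x \in R -> y x \notin R.
Hypothesis y_sq : forall x, x \in R -> sqsub x (y x).
Hypothesis y_back : forall r x a, r \notin R -> x \in R -> safeA r a x -> SPsub (y x) x.

Definition Yf x := if x \in R then y x else x.
Lemma Y_notin x : Yf x \notin R.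
Proof. by rewrite /Yf; case: ifP => [/yR //| /negbT]. Qed.
Lemma Y_sq x : sqsub x (Yf x).
Proof. by rewrite /Yf; case: ifP => [/y_sq|_] //; apply: sqsub_refl. Qed.
Lemma Y_equiv x : equivX (Yf x) x.
Proof. by apply: equivX_sym; case: (Y_sq x). Qed.

Definition stC : finType := {x : st A | x \notin R}.
Definition toC x : stC := exist _ (Yf x) (Y_notin x).

Definition deltaC (c : stC) a : {set stC} :=
  [set t : stC | [exists s, (s \in delta (val c) a) && pb (equivX (val t) s)]].
Definition safeC (c : stC) a (t : stC) : bool :=
  [exists s, safeA (val c) a s && (Yf s == val t)].
Definition alphaC (c : stC) a (t : stC) : bool := (t \in deltaC c a) && ~~ safeC c a t.

Lemma deltaC_ne c a : deltaC c a != set0.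
Proof.
have /set0Pn [s Hs] := delta_ne A (val c) a.
apply/set0Pn; exists (toC s); rewrite inE; apply/existsP; exists s.
by rewrite Hs /=; apply/pbP; apply: Y_equiv.
Qed.

Lemma alphaC_sub c a t : alphaC c a t -> t \in deltaC c a.
Proof. by case/andP. Qed.

Definition C : tNCW Sigma := @TNCW Sigma stC (toC (init A)) deltaC deltaC_ne alphaC alphaC_sub.

Lemma safeC_delta c a t : safeC c a t -> t \in deltaC c a.
Proof.
move=> /existsP [s /andP [/andP [Hs _] /eqP E]].
rewrite inE; apply/existsP; exists s; rewrite Hs /=; apply/pbP; rewrite -E; apply: Y_equiv.
Qed.

Lemma safeC_det c a t t' : safeC c a t -> safeC c a t' -> t = t'.
Proof.
move=> /existsP [s /andP [Hs /eqP E]] /existsP [s' /andP [Hs' /eqP E']].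
apply: val_inj; rewrite -E -E'.
have := sstep_det safedA Hs; rewrite (sstep_det safedA Hs') => -[->] //.
Qed.

Variable x0 : st A.
Hypothesis x0R : x0 \in R.

Lemma card_C : #|st C| < #|st A|.
Proof.
rewrite /= card_sig -(cardC R).
have H : 0 < #|R| by apply/card_gt0P; exists x0.
have -> : #|[pred x | x \notin R]| = #|[predC R]| by apply: eq_card.
by rewrite -[X in X < _]add0n ltn_add2r.
Qed.

Lemma C_sub w : accepts C w -> accepts A w.
Proof.
move=> [r [[r0 rs] [N HN]]].
have Inv : forall i, accepts A w <-> accepts (with_init (val (r i))) (wdrop i w).
  elim=> [|i IH].
    rewrite r0 /=; have E := Y_equiv (init A) w.
    split => H.
      by apply: accepts_ext (E.2 H).
    by apply: E.1; apply: accepts_ext H.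
  rewrite IH.
  have := rs i; rewrite inE => /existsP [s /andP [Hs /pbP E]].
  rewrite (E (wdrop i.+1 w)) -(acc_step _ sdA Hs).
  by split; apply: accepts_ext => -[|n] //=; rewrite /wdrop ?addn0 ?addnS.
apply: (Inv N).2.
apply: safe_acc.
have key : forall n, exists2 x, sread (val (r N)) (pref (wdrop N w) n) = Some x &
                                 SPsub (val (r (N + n))) x.
  elim=> [|n [x Hx Hsub]]; first by exists (val (r N)); rewrite ?addn0 //.
  have Hsafe : safeC (r (N + n)) (w (N + n)) (r (N + n).+1).
    have := HN (N + n) (leq_addr _ _); have := rs (N + n).
    by rewrite /= /alphaC => ->; rewrite negbK.
  move: Hsafe => /existsP [s /andP [Hs /eqP Es]].
  have [x' Hx' Hsub'] := SPsub_step Hsub (sstep_det safedA Hs).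
  exists x'.
    have -> : pref (wdrop N w) n.+1 = rcons (pref (wdrop N w) n) (w (N + n)).
      by rewrite /Defs.prefix mkseqS.
    by rewrite sread_rcons Hx /=.
  rewrite addnS -Es /Yf; case: ifP => HsR //.
  apply: SPsub_trans Hsub'; apply: y_back HsR Hs; exact: (valP (r (N + n))).
by move=> n; have [x -> _] := key n.
Qed.

Variable f : seq Sigma -> st A.
Hypotheses (f0 : f [::] = init A) (fs : forall u a, f (rcons u a) \in delta (f u) a)
  (facc : forall w, accepts A w -> run_accepting A w (fun i => f (pref w i))).

Definition nextC (c : stC) a (u' : seq Sigma) : stC :=
  if [pick t | safeC c a t] is Some t then t else toC (f u').
Fixpoint g' (ru : seq Sigma) : stC :=
  match ru with [::] => toC (init A) | a :: ru' => nextC (g' ru') a (rev ru) end.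
Definition g u := g' (rev u).

Lemma g_nil : g [::] = toC (init A). Proof. by []. Qed.
Lemma g_rcons u a : g (rcons u a) = nextC (g u) a (rcons u a).
Proof. by rewrite /g rev_rcons /= rev_cons revK. Qed.

Lemma g_equiv u : equivX (val (g u)) (f u).
Proof.
elim/last_ind: u => [|u a IH]; first by rewrite g_nil f0; apply: Y_equiv.
rewrite g_rcons /nextC; case: pickP => [t Ht|_]; last by apply: Y_equiv.
move: Ht => /existsP [s /andP [Hs /eqP E]].
rewrite -E; apply: equivX_trans (Y_equiv s) _.
have /andP [Hs1 _] := Hs.
exact: succ_equiv sdA sdA IH Hs1 (fs u a).
Qed.

Lemma g_delta u a : g (rcons u a) \in deltaC (g u) a.
Proof.
rewrite g_rcons /nextC; case: pickP => [t Ht|_]; first exact: safeC_delta.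
have /set0Pn [s Hs] := delta_ne A (val (g u)) a.
rewrite inE; apply/existsP; exists s; rewrite Hs /=; apply/pbP.
apply: equivX_trans (Y_equiv _) _.
apply: equivX_sym; exact: succ_equiv sdA sdA (g_equiv u) Hs (fs u a).
Qed.

Lemma pick_safe u a t : [pick t | safeC (g u) a t] = Some t ->
  g (rcons u a) = t /\ ~~ alphaC (g u) a t.
Proof.
move=> E; rewrite g_rcons /nextC E; split => //.
case: pickP E => [t' Ht' [<-]|//].
by rewrite /alphaC Ht' andbF.
Qed.

Lemma g_acc w : accepts A w -> run_accepting C w (fun i => g (pref w i)).
Proof.
move=> /facc [N HN].
have prS : forall i, pref w i.+1 = rcons (pref w i) (w i).
  by move=> i; rewrite /Defs.prefix mkseqS.
have fsafe : forall i, N <= i -> sstep (f (pref w i)) (w i) = Some (f (pref w i.+1)).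
  move=> i Hi; apply: (sstep_det safedA); rewrite /safeA (HN i Hi) andbT prS; exact: fs.
case: (classic (exists i, N <= i /\ [pick t | safeC (g (pref w i)) (w i) t] = None)).
  move=> [i [Hi Hp]].
  have key : forall n, SPsub (f (pref w (i.+1 + n))) (val (g (pref w (i.+1 + n)))) /\
     exists t, [pick t | safeC (g (pref w (i.+1 + n))) (w (i.+1 + n)) t] = Some t.
    have base : SPsub (f (pref w (i.+1 + 0))) (val (g (pref w (i.+1 + 0)))).
      rewrite addn0 prS g_rcons /nextC Hp /=; by case: (Y_sq (f (rcons (pref w i) (w i)))).
    have ex : forall n, SPsub (f (pref w (i.+1 + n))) (val (g (pref w (i.+1 + n)))) ->
       exists2 t, [pick t | safeC (g (pref w (i.+1 + n))) (w (i.+1 + n)) t] = Some t &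
         SPsub (f (pref w (i.+1 + n).+1)) (val t).
      move=> n Hsub.
      have Hj : N <= i.+1 + n by apply: leq_trans Hi _; rewrite addSn; apply: leqW; apply: leq_addr.
      have [s Hs Hsub'] := SPsub_step Hsub (fsafe _ Hj).
      have Hsc : safeC (g (pref w (i.+1 + n))) (w (i.+1 + n)) (toC s).
        by apply/existsP; exists s; rewrite (sstep_safe Hs) /=.
      case: pickP => [t Ht|H]; last by rewrite H in Hsc.
      exists t => //; rewrite (safeC_det Ht Hsc) /=.
      by apply: SPsub_trans Hsub' _; case: (Y_sq s).
    elim=> [|n [IH _]].
      by split => //; have [t Ht _] := ex 0 base; exists t.
    have [t Ht Hsub] := ex n IH.
    have [Eg _] := pick_safe Ht.
    have Hsub2 : SPsub (f (pref w (i.+1 + n.+1))) (val (g (pref w (i.+1 + n.+1)))).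
      by rewrite addnS prS Eg -prS.
    by split => //; have [t' Ht' _] := ex n.+1 Hsub2; exists t'.
  exists i.+1 => j Hj.
  have -> : j = i.+1 + (j - i.+1) by rewrite subnKC.
  have [_ [t Ht]] := key (j - i.+1).
  have [Eg Ha] := pick_safe Ht.
  by rewrite /= prS Eg.
move=> Hno; exists N => i Hi.
case E: [pick t | safeC (g (pref w i)) (w i) t] => [t|].
  have [Eg Ha] := pick_safe E; by rewrite /= prS Eg.
by exfalso; apply: Hno; exists i.
Qed.

Lemma C_GFG : GFG C.
Proof.
exists g; split; [by [] | split; [exact: g_delta|]].
move=> w /C_sub; exact: g_acc.
Qed.

Lemma C_lang : same_lang C A.
Proof.
move=> w; split; first exact: C_sub.
move=> H; exists (fun i => g (pref w i)); split; last exact: g_acc.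
split => // i; rewrite /Defs.prefix mkseqS; exact: g_delta.
Qed.

End Reduction.

Lemma reduction_contra {Sigma : finType} (A : tNCW Sigma) :
  semantically_deterministic A -> safe_deterministic A -> GFG A -> minimal_GFG A ->
  forall (R : {set st A}) (y : st A -> st A) (x0 : st A), x0 \in R ->
  (forall x, x \in R -> y x \notin R) ->
  (forall x, x \in R -> sqsub x (y x)) ->
  (forall r x a, r \notin R -> x \in R -> safeA r a x -> SPsub (y x) x) -> False.
Proof.
move=> sdA safedA [f [f0 [fs facc]]] minA R y x0 x0R yR y_sq y_back.
have H1 := C_GFG sdA safedA yR y_sq y_back f0 fs facc.
have H2 := C_lang sdA safedA yR y_sq y_back f0 fs facc.
have := minA _ H1 H2.
by rewrite leqNgt (card_C yR y_sq x0R).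
Qed.


Section Props.
Context {Sigma : finType}.
Local Notation word := (@word Sigma).
Local Notation pref := Defs.prefix.

Lemma SM_min (X : tNCW Sigma) :
  semantically_deterministic X -> safe_deterministic X -> GFG X -> minimal_GFG X ->
  forall q p : st X, sqsub q p -> sqsub p q -> q = p.
Proof.
move=> sd safed gfg mini q p Hqp Hpq.
case: (eqVneq q p) => // Hne; exfalso.
apply: (reduction_contra sd safed gfg mini (R := [set q]) (y := fun _ => p) (x0 := q)).
- by rewrite inE.
- by move=> x _; rewrite inE eq_sym.
- by move=> x; rewrite inE => /eqP ->.
- by move=> r x a _; rewrite inE => /eqP -> _; case: Hpq.
Qed.

Lemma SC_min (X : tNCW Sigma) :
  semantically_deterministic X -> safe_deterministic X -> GFG X -> minimal_GFG X ->
  normal X ->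
  forall q s : st X, sqsub q s -> connect (safe_rel X) q s.
Proof.
move=> sd safed gfg mini nrm q s Hqs.
apply: NNPP => Hnc.
pose R := [set x | connect (safe_rel X) q x].
have ex : forall x, x \in R -> exists z, sqsub x z /\ z \notin R.
  move=> x; rewrite inE => /(connect_sread safed) [u Hu].
  have [z Hz Hxz] := sqsub_read sd sd Hqs Hu.
  exists z; split => //; rewrite inE; apply/negP => Hqz.
  apply: Hnc; exact: (nrm _ _ (connect_trans (sread_connect Hz) (nrm _ _ Hqz))).
pose y x := epsilon (inhabits x) (fun z => sqsub x z /\ z \notin R).
have yspec : forall x, x \in R -> sqsub x (y x) /\ y x \notin R.
  by move=> x /ex Hx; apply: (epsilon_spec (inhabits x) _ Hx).
apply: (reduction_contra sd safed gfg mini (R := R) (y := y) (x0 := q)).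
- by rewrite inE connect0.
- by move=> x /yspec [].
- by move=> x /yspec [].
- move=> r x a; rewrite !inE => Hr Hx Hs; exfalso; move/negP: Hr; apply.
  apply: connect_trans Hx (nrm _ _ (connect1 (safe_rel_safeA Hs))).
Qed.

Lemma connect_steps (X : tNCW Sigma) (x y : st X) :
  connect (trans_rel X) x y -> exists u, steps x u y.
Proof.
move=> /connectP [p Hp ->]; elim: p x Hp => [|x1 p IH] x /=.
  by move=> _; exists [::]; constructor.
move=> /andP [/existsP [a Ha] Hp]; have [u Hu] := IH _ Hp.
by exists (a :: u); apply: stepsS Ha Hu.
Qed.

Fixpoint iterapp (stp : seq Sigma -> seq Sigma) (k : nat) : seq Sigma :=
  if k is k'.+1 then iterapp stp k' ++ stp (iterapp stp k') else [::].

Lemma iterapp_pre stp k m : k <= m -> exists t, iterapp stp m = iterapp stp k ++ t.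
Proof.
elim: m => [|m IH]; first by rewrite leqn0 => /eqP ->; exists [::]; rewrite cats0.
rewrite leq_eqVlt => /orP [/eqP -> | Hk]; first by exists [::]; rewrite cats0.
have [t Ht] := IH Hk; exists (t ++ stp (iterapp stp m)); by rewrite /= Ht catA.
Qed.

Lemma take_cat_le (T : Type) (v zz : seq T) j : j <= size v -> take j (v ++ zz) = take j v.
Proof.
move=> Hj; rewrite take_cat; case: ltnP => // H.
have E : j = size v by apply/eqP; rewrite eqn_leq Hj H.
by rewrite E subnn take0 cats0 take_size.
Qed.

Lemma M_exists (A B : tNCW Sigma) :
  semantically_deterministic A -> semantically_deterministic B ->
  safe_deterministic A -> safe_deterministic B ->
  normal A -> all_reachable A -> GFG B -> same_lang A B ->
  forall q : st A, exists s : st B, sqsub q s.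
Proof.
move=> sdA sdB safedA safedB normA reachA [f [f0 [fs facc]]] HAB q.
apply: NNPP => Hno.
have [u0 Hu0] := connect_steps (reachA q).
pose Spec P vz := exists v zz, [/\ vz = v ++ zz, sread q (v ++ zz) = Some q &
                                  sread (f (u0 ++ P)) v = None].
have ex : forall P, sread q P = Some q -> exists vz, Spec P vz.
  move=> P HP.
  have Eq : equivX q (f (u0 ++ P)).
    apply: (steps_equiv (x := init A) (x' := init B) (u := u0 ++ P) sdA sdB).
    - by move=> w; exact: HAB.
    - exact: steps_cat Hu0 (sread_steps HP).
    - exact: strat_steps.
  have [v Hv] : exists v, ~ (sread q v != None -> sread (f (u0 ++ P)) v != None).
    apply: NNPP => H; apply: Hno; exists (f (u0 ++ P)); split => // v.
    by apply: NNPP => H'; apply: H; exists v.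
  have [Hv1 Hv2] : sread q v != None /\ sread (f (u0 ++ P)) v = None.
    split; first by case E: (sread q v) Hv => [x|] // Hv; exfalso; apply: Hv.
    by case E: (sread (f (u0 ++ P)) v) Hv => [y|] //= Hv; exfalso; apply: Hv.
  case Ex: (sread q v) Hv1 => [x|] // _.
  have /(connect_sread safedA) [zz Hzz] := normA _ _ (sread_connect Ex).
  by exists (v ++ zz), v, zz; rewrite sread_cat Ex /=.
pose stp P := epsilon (inhabits [::]) (Spec P).
pose Q := iterapp stp.
have Good : forall k, sread q (Q k) = Some q /\ Spec (Q k) (stp (Q k)).
  elim=> [|k [IH _]].
    by split => //; exact: (epsilon_spec (inhabits [::]) _ (ex [::] erefl)).
  have Hs : Spec (Q k) (stp (Q k)) := epsilon_spec (inhabits [::]) _ (ex _ IH).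
  have [v [zz [Ev Hr _]]] := Hs.
  have G : sread q (Q k.+1) = Some q.
    by change (sread q (Q k ++ stp (Q k)) = Some q); rewrite sread_cat IH /= Ev.
  by split => //; apply: (epsilon_spec (inhabits [::]) _ (ex _ G)).
have stp_ne : forall k, 0 < size (stp (Q k)).
  move=> k; have [_ [v [zz [-> _ Hn]]]] := Good k.
  by case: v Hn => //= _; rewrite size_cat.
have sizeQ : forall k, k <= size (Q k).
  elim=> [//|k IH]; change (k.+1 <= size (Q k ++ stp (Q k))); rewrite size_cat.
  by rewrite -addn1 leq_add.
have [a0 _] : exists a : Sigma, True.
  have := stp_ne 0; case: (stp (Q 0)) => // a _ _; by exists a.
pose U m := u0 ++ Q m.
pose w : word := fun n => nth a0 (U n.+1) n.
have sizeU : forall m, size (U m) = size u0 + size (Q m) by move=> m; rewrite size_cat.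
have preU : forall k m, k <= m -> exists t, U m = U k ++ t.
  move=> k m Hkm; have [t Ht] := iterapp_pre stp Hkm.
  by exists t; rewrite /U /Q Ht catA.
have wU : forall n m, n < size (U m) -> w n = nth a0 (U m) n.
  move=> n m Hn; rewrite /w; case: (leqP n.+1 m) => H.
    have [t ->] := preU _ _ H; rewrite nth_cat; case: ifP => // /negbT.
    by rewrite -leqNgt sizeU => H'; have := sizeQ n.+1; lia.
  have [t ->] := preU m n.+1 (ltnW H); by rewrite nth_cat Hn.
have prefW : forall n m, n <= size (U m) -> pref w n = take n (U m).
  move=> n m Hn; apply: (eq_from_nth (x0 := a0)).
    by rewrite size_mkseq size_take; case: ltnP => // H; apply/eqP; rewrite eqn_leq Hn H.
  move=> i; rewrite size_mkseq => Hi.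
  rewrite nth_mkseq // nth_take // (wU i m) //; exact: leq_trans Hi Hn.
have accA : accepts A w.
  apply: (acc_steps (a0 := a0) Hu0).
    move=> i Hi; rewrite (wU i 0); first by rewrite /U /Q /= cats0.
    by rewrite sizeU; apply: leq_trans Hi (leq_addr _ _).
  apply: safe_acc => n.
  have -> : pref (wdrop (size u0) w) n = take n (Q n).
    apply: (eq_from_nth (x0 := a0)).
      by rewrite size_mkseq size_take; case: ltnP => // H; apply/eqP; rewrite eqn_leq sizeQ H.
    move=> i; rewrite size_mkseq => Hi.
    rewrite nth_mkseq // nth_take // /wdrop (wU _ n).
      by rewrite /U nth_cat ltnNge leq_addr /= addKn.
    by rewrite sizeU ltn_add2l; apply: leq_trans Hi (sizeQ n).
  by apply: sread_take; rewrite (proj1 (Good n)).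
have [N HN] := facc w ((HAB w).1 accA).
have [_ [v [zz [Ev _ Hnone]]]] := Good N.
have UN1 : U N.+1 = U N ++ (v ++ zz).
  by change (u0 ++ (Q N ++ stp (Q N)) = (u0 ++ Q N) ++ (v ++ zz)); rewrite Ev catA.
have := @strat_safe_read _ B f a0 safedB fs v (U N).
rewrite Hnone => H; suff : None = Some (f (U N ++ v)) by [].
apply: H => j Hj.
have Hi : N <= size (U N) + j.
  by rewrite sizeU; have := sizeQ N; lia.
have Hlt : size (U N) + j < size (U N.+1).
  by rewrite UN1 !size_cat; lia.
have := HN _ Hi.
rewrite (prefW _ N.+1 (ltnW Hlt)) (prefW _ N.+1 Hlt) (wU _ _ Hlt) UN1.
rewrite nth_cat ltnNge leq_addr /= addKn nth_cat Hj.
have tsa : forall (s t : seq Sigma) n, take (size s + n) (s ++ t) = s ++ take n t.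
  by move=> s t n; rewrite take_cat ltnNge leq_addr /= addKn.
rewrite -addnS !tsa. rewrite (take_cat_le _ (ltnW Hj)) (take_cat_le _ Hj). by [].
Qed.

Lemma pigeon (T : finType) (h : T -> T) x : exists i j, i < j /\ iter i h x = iter j h x.
Proof.
apply: NNPP => H.
pose g (k : 'I_#|T|.+1) := iter k h x.
have gi : injective g.
  move=> k1 k2 E; apply: val_inj; case: (ltngtP k1 k2) => // Hlt; exfalso; apply: H.
    by exists k1, k2.
  by exists k2, k1.
by have := leq_card g gi; rewrite card_ord ltnn.
Qed.

End Props.


Lemma sqsub_iter {Sigma : finType} (X : tNCW Sigma) (h : st X -> st X) :
  (forall x, sqsub x (h x)) -> forall n x, sqsub x (iter n h x).
Proof.
move=> H; elim=> [|n IH] x; first exact: sqsub_refl.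
rewrite iterS; exact: sqsub_trans (IH x) (H _).
Qed.

Lemma strong_exists {Sigma : finType} (A B : tNCW Sigma) :
  semantically_deterministic A -> semantically_deterministic B ->
  safe_deterministic A -> safe_deterministic B -> normal A ->
  (forall q s : st A, sqsub q s -> connect (safe_rel A) q s) ->
  (forall q : st A, exists s : st B, sqsub q s) ->
  (forall s : st B, exists q : st A, sqsub s q) ->
  forall q : st A, exists s : st B, sqsub q s /\ sqsub s q.
Proof.
move=> sdA sdB safedA safedB normA SCA MAB MBA q.
pose phi (x : st A) := epsilon (inhabits (init B)) (fun s => sqsub x s).
pose psi (s : st B) := epsilon (inhabits (init A)) (fun x => sqsub s x).
have phiS : forall x, sqsub x (phi x) by move=> x; apply: epsilon_spec; apply: MAB.
have psiS : forall s, sqsub s (psi s) by move=> s; apply: epsilon_spec; apply: MBA.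
pose h x := psi (phi x).
have hS : forall x, sqsub x (h x) by move=> x; exact: sqsub_trans (phiS x) (psiS _).
have [i [j [Hij E]]] := pigeon h q.
pose x := iter i h q.
have Hx : sqsub (phi x) x.
  have E' : iter j h q = iter (j - i).-1 h (h x).
    by rewrite -iterSr prednK ?subn_gt0 // -iterD subnK // ltnW.
  have := sqsub_iter hS (j - i).-1 (h x); rewrite -E' -E -/x => H.
  exact: sqsub_trans (psiS _) H.
have /normA /(connect_sread safedA) [u Hu] := SCA _ _ (sqsub_iter hS i q).
have [s' Hs' Hqs'] := sqsub_read sdA sdB (phiS x) Hu.
have [x'' Hx'' Hs'x] := sqsub_read sdB sdA Hx Hs'.
rewrite Hu in Hx''; case: Hx'' => <- in Hs'x.
by exists s'.
Qed.

Unset Implicit Arguments.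
Theorem mainTheorem2 (Sigma : finType) (A B : tNCW Sigma) :
  GFG A -> GFG B -> nice A -> nice B ->
  same_lang A B ->
  minimal_GFG A -> minimal_GFG B ->
  safe_isomorphic A B.
Proof.
move=> gA gB nA nB HAB minA minB.
case: nA => reachA _ normA safedA sdA.
case: nB => reachB _ normB safedB sdB.
have SMA := SM_min sdA safedA gA minA.
have SMB := SM_min sdB safedB gB minB.
have SCA := SC_min sdA safedA gA minA normA.
have HBA : same_lang B A by move=> w; split => /(HAB w).
have MAB := M_exists sdA sdB safedA safedB normA reachA gB HAB.
have MBA := M_exists sdB sdA safedB safedA normB reachB gA HBA.
have SE := strong_exists sdA sdB safedA safedB normA SCA MAB MBA.
pose k (q : st A) := epsilon (inhabits (init B)) (fun s => sqsub q s /\ sqsub s q).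
have kS : forall q, sqsub q (k q) /\ sqsub (k q) q by move=> q; exact: (epsilon_spec (inhabits (init B)) _ (SE q)).
have kinj : injective k.
  move=> q1 q2 E; apply: SMA.
    by apply: sqsub_trans (proj1 (kS q1)) _; rewrite E; exact: (proj2 (kS q2)).
  by apply: sqsub_trans (proj1 (kS q2)) _; rewrite -E; exact: (proj2 (kS q1)).
exists k; split.
  exact: (inj_card_bij kinj (minB _ gA HAB)).
move=> q q' a; apply/idP/idP.
- move=> H; have Hq := sstep_det safedA H.
  have [s' Hs' Hq's'] := sqsub_step sdA sdB (proj1 (kS q)) Hq.
  have [q'' Hq'' Hs'q''] := sqsub_step sdB sdA (proj2 (kS q)) Hs'.
  rewrite Hq in Hq''; case: Hq'' => <- in Hs'q''.
  have -> : k q' = s'.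
    apply: SMB.
      exact: sqsub_trans (proj2 (kS q')) Hq's'.
    exact: sqsub_trans Hs'q'' (proj1 (kS q')).
  exact: sstep_safe Hs'.
- move=> H; have Hk := sstep_det safedB H.
  have [q'' Hq'' Hkq''] := sqsub_step sdB sdA (proj2 (kS q)) Hk.
  have [s'' Hs'' Hq''s''] := sqsub_step sdA sdB (proj1 (kS q)) Hq''.
  rewrite Hk in Hs''; case: Hs'' => <- in Hq''s''.
  have -> : q' = q''.
    apply: SMA.
      exact: sqsub_trans (proj1 (kS q')) Hkq''.
    exact: sqsub_trans Hq''s'' (proj2 (kS q')).
  exact: sstep_safe Hq''.
Qed.
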